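(* Let $V$ be a Hilbert space of functions on a domain $\Omega\subset\mathbb{R}^d$ with a norm $\|\cdot\|$, let $\mathcal{T}_0$ be a (coarse) triangulation of $\Omega$, and for each $T\in\mathcal{T}_0$ let $\|\cdot\|_T$ be a norm on $V|_T$ with $\|v\|_T=\|v|_T\|$ for all $v\in V$. Let $V_0\subset\dots\subset V_L\subset V$ be nested finite element spaces, $u\in V$ the exact solution of a variational problem $a(u,v)=b(v)$ for all $v\in V$, and $u_k\in V_k$ the discrete solutions. Set $e_k:=u-u_k$, $\tilde e_k:=u_L-u_k$ and $\theta_{k,T}:=\|e_k\|_T/\|e_{k-1}\|_T$. Let $0<j<L$ be an integer and $\ell:=L-j$, and suppose there exist $\varepsilon>0$ and constants $\theta_T>0$, $T\in\mathcal{T}_0$, such that $$\theta_T\le\theta_{i,T}\le(1+\varepsilon)\theta_T<1\quad\text{for all }T\in\mathcal{T}_0\text{ and all } i \text{ with } \ell\le i\le L.$$ Define the unscaled local estimates $\eta'_{j,T}:=\|\tilde e_{L-j}\|_T$, the local effectivity indices $\gamma_T:=\eta'_{j,T}/\|e_L\|_T$, $\partial\gamma:=\max_{T\in\mathcal{T}_0}\gamma_T/\min_{T\in\mathcal{T}_0}\gamma_T$, and $$\theta_{\min}:=\min_{T\in\mathcal{T}_0}\theta_T,\qquad \theta_{\max}:=(1+\varepsilon)\max_{T\in\mathcal{T}_0}\theta_T.$$ Then $$\partial\gamma\le\frac{\theta_{\min}^{-j}+1}{\theta_{\max}^{-j}-1}.$$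
   Context: $a:V\times V\to\mathbb{R}$ is a bilinear form and $b:V\to\mathbb{R}$ a linear form; $u_k$ are the exact Galerkin solutions on the spaces $V_k$, which are associated with nested triangulations obtained from $\mathcal{T}_0$ by successive uniform refinement, so every $T\in\mathcal{T}_0$ is a union of fine elements. The quantities $\theta_{k,T}$ are local grid convergence factors and $\eta'_{j,T}$ is a local error indicator for $\|e_L\|_T$. *)

(* Defs.v *)
From HB Require Import structures.
From mathcomp Require Import all_boot all_order all_algebra.
From mathcomp Require Import all_classical all_reals all_analysis.
Set Implicit Arguments. Unset Strict Implicit. Unset Printing Implicit Defensive.
Import Order.TTheory GRing.Theory Num.Theory.
Import numFieldNormedType.Exports.
Local Open Scope ring_scope.
Local Open Scope classical_set_scope.

Section Defs.
Variable R : realType.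

(* a seminorm on a real vector space: the local norm v |-> ||v|_T|| is a
   seminorm on V *)
Definition is_seminorm (V : lmodType R) (p : V -> R) : Prop :=
  [/\ forall (r : R) (v : V), p (r *: v) = `|r| * p v
    & forall v w : V, p (v + w) <= p v + p w].

Definition is_subspace (V : lmodType R) (S : set V) : Prop :=
  S 0 /\ forall (r : R) (v w : V), S v -> S w -> S (r *: v + w).

Definition is_linear_form (V : lmodType R) (b : V -> R) : Prop :=
  forall (r : R) (v w : V), b (r *: v + w) = r * b v + b w.

Definition is_bilinear_form (V : lmodType R) (a : V -> V -> R) : Prop :=
  (forall w, is_linear_form (fun v => a v w)) /\
  (forall v, is_linear_form (fun w => a v w)).

(* max / min of f over a nonempty finite type (t0 witnesses nonemptiness;
   the value does not depend on t0) *)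
Definition fmax (I : finType) (t0 : I) (f : I -> R) : R :=
  \big[Num.max/f t0]_(t : I) f t.
Definition fmin (I : finType) (t0 : I) (f : I -> R) : R :=
  \big[Num.min/f t0]_(t : I) f t.

End Defs.

(* Main.v *)
Require Import Defs.
From HB Require Import structures.
From mathcomp Require Import all_boot all_order all_algebra.
From mathcomp Require Import all_classical all_reals all_analysis.
Import Order.TTheory GRing.Theory Num.Theory.
Import numFieldNormedType.Exports.
Local Open Scope ring_scope.
Local Open Scope classical_set_scope.
From mathcomp Require Import lra zify.

Section Helpers.
Variable R : realType.

Lemma sn_facts (V : lmodType R) (p : V -> R) : is_seminorm p ->
  (forall v, 0 <= p v) /\ (forall x y, p (x - y) <= p x + p y) /\
  (forall x y, p x - p y <= p (x - y)).
Proof.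
case=> hs ht.
have h0 : p 0 = 0 by rewrite -(scale0r (0 : V)) hs normr0 mul0r.
have hN : forall v, p (- v) = p v.
  by move=> v; rewrite -scaleN1r hs normrN normr1 mul1r.
have hge : forall v, 0 <= p v.
  move=> v; have := ht v (- v); rewrite subrr h0 hN => h; lra.
split=> //; split=> x y.
  by rewrite -[p y]hN; apply: ht.
have := ht (x - y) y; rewrite subrK => h; lra.
Qed.

Lemma bigmax_ge (I : finType) (t0 t : I) (f : I -> R) : f t <= fmax t0 f.
Proof.
rewrite /fmax; have : t \in index_enum I by rewrite mem_index_enum.
elim: (index_enum I) => //= a s IH.
rewrite in_cons big_cons le_max.
by case/orP=> [/eqP->|/IH->]; rewrite ?lexx ?orbT.
Qed.

Lemma bigmin_le (I : finType) (t0 t : I) (f : I -> R) : fmin t0 f <= f t.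
Proof.
rewrite /fmin; have : t \in index_enum I by rewrite mem_index_enum.
elim: (index_enum I) => //= a s IH.
rewrite in_cons big_cons ge_min.
by case/orP=> [/eqP->|/IH->]; rewrite ?lexx ?orbT.
Qed.

Lemma bigmax_le (I : finType) (t0 : I) (f : I -> R) c :
  (forall t, f t <= c) -> fmax t0 f <= c.
Proof.
move=> H; rewrite /fmax; apply: (big_ind (fun x => x <= c)) => //.
by move=> x y hx hy; rewrite ge_max hx hy.
Qed.

Lemma bigmax_lt (I : finType) (t0 : I) (f : I -> R) c :
  (forall t, f t < c) -> fmax t0 f < c.
Proof.
move=> H; rewrite /fmax; apply: (big_ind (fun x => x < c)) => //.
by move=> x y hx hy; rewrite gt_max hx hy.
Qed.

Lemma bigmin_ge (I : finType) (t0 : I) (f : I -> R) c :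
  (forall t, c <= f t) -> c <= fmin t0 f.
Proof.
move=> H; rewrite /fmin; apply: (big_ind (fun x => c <= x)) => //.
by move=> x y hx hy; rewrite le_min hx hy.
Qed.

Lemma bigmin_gt (I : finType) (t0 : I) (f : I -> R) c :
  (forall t, c < f t) -> c < fmin t0 f.
Proof.
move=> H; rewrite /fmin; apply: (big_ind (fun x => c < x)) => //.
by move=> x y hx hy; rewrite lt_min hx hy.
Qed.

Lemma chain (f : nat -> R) (N j : nat) (c1 c2 : R) : (j <= N)%N -> 0 < c1 ->
  (forall k, 0 <= f k) ->
  (forall i, (N - j <= i)%N -> (i <= N)%N ->
      c1 <= f i / f i.-1 /\ f i / f i.-1 <= c2) ->
  0 < f (N - j)%N /\ forall m, (m <= j)%N ->
    c1 ^+ m * f (N - j)%N <= f (N - j + m)%N /\ f (N - j + m)%N <= c2 ^+ m * f (N - j)%N.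
Proof.
move=> jN c10 fge H.
have pos : forall i, (N - j <= i)%N -> (i <= N)%N -> 0 < f i.
  move=> i h1 h2; have [h _] := H i h1 h2.
  rewrite lt_neqAle fge andbT; apply/eqP => fi0.
  by move: h; rewrite -fi0 mul0r; lra.
split; first by apply: pos => //; rewrite leq_subr.
elim=> [|m IH] hm; first by rewrite expr0 mul1r addn0; lra.
have [IH1 IH2] := IH (ltnW hm).
have hi1 : (N - j <= N - j + m.+1)%N by apply: leq_addr.
have hi2 : (N - j + m.+1 <= N)%N by lia.
have [r1 r2] := H _ hi1 hi2.
have fp : 0 < f (N - j + m)%N by apply: pos; [apply: leq_addr| lia].
have E : f (N - j + m.+1)%N = f (N - j + m.+1)%N / f (N - j + m)%N * f (N - j + m)%N.
  by rewrite divfK // gt_eqF.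
move: r1 r2; rewrite addnS /= -addnS => r1 r2.
set r := f _ / f _ in r1 r2 E; clearbody r.
rewrite E !exprS -!mulrA; split.
  apply: ler_pM => //; first lra.
  by rewrite mulr_ge0 // ?exprn_ge0 ?fge; lra.
by apply: ler_pM => //; lra.
Qed.

End Helpers.
Arguments bigmax_ge {R I}.
Arguments sn_facts {R V p}.

Theorem corollary2 (R : realType) (V : completeNormedModType R)
  (Tri : finType) (T0 : Tri) (nT : Tri -> V -> R)
  (a : V -> V -> R) (b : V -> R) (Vs : nat -> set V)
  (u : V) (uk : nat -> V) (L j : nat) (eps : R) (thT : Tri -> R) :
  (forall T, is_seminorm (nT T)) ->
  is_bilinear_form a -> is_linear_form b ->
  (forall k, (k <= L)%N -> is_subspace (Vs k)) ->
  (forall k, (k < L)%N -> Vs k `<=` Vs k.+1) ->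
  (forall v, a u v = b v) ->
  (forall k, (k <= L)%N -> Vs k (uk k) /\ forall v, Vs k v -> a (uk k) v = b v) ->
  (0 < j)%N -> (j < L)%N ->
  0 < eps -> (forall T, 0 < thT T) ->
  (let e := fun k => u - uk k in
   let theta := fun k T => nT T (e k) / nT T (e k.-1) in
   forall T i, (L - j <= i)%N -> (i <= L)%N ->
     thT T <= theta i T /\ theta i T <= (1 + eps) * thT T /\
     (1 + eps) * thT T < 1) ->
  let e := fun k => u - uk k in
  let eta' := fun T => nT T (uk L - uk (L - j)%N) in
  let gamma := fun T => eta' T / nT T (e L) in
  let dgamma := fmax T0 gamma / fmin T0 gamma in
  let thmin := fmin T0 thT in
  let thmax := (1 + eps) * fmax T0 thT in
  dgamma <= (thmin ^- j + 1) / (thmax ^- j - 1).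
Proof.
move=> Hsn _ _ _ _ _ _ j0 jL eps0 thT0 Hth.
pose e := fun k => u - uk k.
pose eta' := fun T => nT T (uk L - uk (L - j)%N).
pose gamma := fun T => eta' T / nT T (e L).
pose dgamma := fmax T0 gamma / fmin T0 gamma.
pose thmin := fmin T0 thT.
pose thmax := (1 + eps) * fmax T0 thT.
change (dgamma <= (thmin ^- j + 1) / (thmax ^- j - 1)).
have jL' : (j <= L)%N := ltnW jL.
have H2 : forall T i, (L - j <= i)%N -> (i <= L)%N ->
   thT T <= nT T (u - uk i) / nT T (u - uk i.-1) /\
   nT T (u - uk i) / nT T (u - uk i.-1) <= (1 + eps) * thT T /\
   (1 + eps) * thT T < 1 := Hth.
have pe : 0 < 1 + eps by lra.
have thmin0 : 0 < thmin by apply: bigmin_gt.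
have thmaxlt : thmax < 1.
  have h : fmax T0 thT < (1 + eps)^-1 * 1.
    apply: bigmax_lt => t; have [_ [_ h]] := H2 t L (leq_subr _ _) (leqnn _).
    by rewrite (ltr_pdivlMl _ _ pe).
  by move: h; rewrite (ltr_pdivlMl _ _ pe).
have thmax0 : 0 < thmax.
  have := bigmax_ge T0 T0 thT; have := thT0 T0.
  by rewrite /thmax => h1 h2; apply: mulr_gt0 => //; lra.
have B0 : 0 < thmax ^- j - 1.
  have : 1 < thmax ^- j.
    rewrite invf_gt1 ?exprn_gt0 // exprn_ilt1 //; [|lra].
    by rewrite -lt0n.
  lra.
have gT : forall T, thmax ^- j - 1 <= gamma T /\ gamma T <= thmin ^- j + 1.
  move=> T; have tT := thT0 T; have [sn0 [snle snge]] := sn_facts (Hsn T).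
  have := @chain R (fun k => nT T (u - uk k)) L j (thT T) ((1 + eps) * thT T)
     jL' (thT0 T) (fun k => sn0 _)
     (fun i h1 h2 => let: conj a (conj b _) := H2 T i h1 h2 in conj a b).
  case=> /= x0p /(_ j (leqnn j)) []; rewrite subnK // => lo hi.
  set x0 := nT T (u - uk (L - j)%N) in x0p lo hi.
  set xL := nT T (u - uk L) in lo hi.
  have tj : 0 < thT T ^+ j by rewrite exprn_gt0.
  have cp : 0 < (1 + eps) * thT T by rewrite mulr_gt0.
  have cj : 0 < ((1 + eps) * thT T) ^+ j by rewrite exprn_gt0.
  have xLp : 0 < xL by apply: (lt_le_trans _ lo); rewrite mulr_gt0.
  have eq : uk L - uk (L - j)%N = (u - uk (L - j)%N) - (u - uk L).
    by rewrite opprB [RHS]addrC addrA subrK.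
  have eup := snle (u - uk (L - j)%N) (u - uk L).
  have elo := snge (u - uk (L - j)%N) (u - uk L).
  rewrite /gamma /eta' /e eq -/xL; rewrite -/x0 -/xL in eup elo.
  split.
    have h1 : thmax ^- j <= ((1 + eps) * thT T) ^- j.
      rewrite lef_pV2 ?posrE ?exprn_gt0 //; apply: lerXn2r;
        rewrite ?nnegrE; try lra.
      by rewrite /thmax; apply: ler_wpM2l; [lra | apply: bigmax_ge].
    have h2 : ((1 + eps) * thT T) ^- j * xL <= x0.
      by rewrite mulrC ler_pdivrMr // mulrC.
    rewrite ler_pdivlMr // mulrBl mul1r.
    have : thmax ^- j * xL <= ((1 + eps) * thT T) ^- j * xL.
      by apply: ler_wpM2r => //; lra.
    lra.
  have h1 : thT T ^- j <= thmin ^- j.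
    rewrite lef_pV2 ?posrE ?exprn_gt0 //; apply: lerXn2r;
      rewrite ?nnegrE; try lra.
    by rewrite /thmin; apply: bigmin_le.
  have h2 : x0 <= thT T ^- j * xL.
    by rewrite mulrC ler_pdivlMr // mulrC.
  rewrite ler_pdivrMr // mulrDl mul1r.
  have : thT T ^- j * xL <= thmin ^- j * xL.
    by apply: ler_wpM2r => //; lra.
  lra.
have Xle : fmax T0 gamma <= thmin ^- j + 1.
  by apply: bigmax_le => t; case: (gT t).
have Yge : thmax ^- j - 1 <= fmin T0 gamma.
  by apply: bigmin_ge => t; case: (gT t).
have X0 : 0 <= fmax T0 gamma.
  have := bigmax_ge T0 T0 gamma; case: (gT T0) => h _; lra.
have Y0 : 0 < fmin T0 gamma by lra.
rewrite /dgamma ler_pdivrMr // mulrAC ler_pdivlMr //.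
set X := fmax T0 gamma in Xle X0 *; set Y := fmin T0 gamma in Yge Y0 *.
set A := thmin ^- j + 1 in Xle *; set B := thmax ^- j - 1 in B0 Yge *.
nra.
Qed.
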